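(* The elements appearing in a product of $\mathbf{PM}_k$ expressed in the fundamental basis form an interval for the $\leq_{\mathrm{M}}$-partial order. More precisely, for any $k$-packed matrices $M_1$ and $M_2$, $\mathbf{F}_{M_1} \cdot \mathbf{F}_{M_2} = \sum_{\mathrm{ov}(M_1, M_2) \leq_{\mathrm{M}} M \leq_{\mathrm{M}} \mathrm{un}(M_1, M_2)} \mathbf{F}_M$.
   Context: Let $k \geq 1$, $A_k := \{0,1,\dots,k\}$. A $k$-packed matrix of size $n$ is an $n\times n$ matrix with entries in $A_k$ with at least one nonzero entry in each row and column. $\mathbf{PM}_k$ has fundamental basis $(\mathbf{F}_M)$ indexed by $k$-packed matrices and product $\mathbf{F}_{M_1}\cdot\mathbf{F}_{M_2} = \sum_{M \in \mathrm{Sh}_c(M_1,M_2)} \mathbf{F}_M$, where, for sizes $n_1, n_2$, $\mathrm{Sh}_c(M_1,M_2)$ is the set of all matrices obtained by shuffling the columns of $M_1$ with an $n_2 \times n_1$ zero block placed below it, with the columns of $M_2$ with an $n_1 \times n_2$ zero block placed above it. $\mathrm{ov}(M_1,M_2) := \begin{pmatrix} M_1 & 0 \\ 0 & M_2\end{pmatrix}$ and $\mathrm{un}(M_1,M_2) := \begin{pmatrix} 0 & M_1 \\ M_2 & 0 \end{pmatrix}$. Define $\to$ on $k$-packed matrices of size $n$: $M_1 \to M_2$ if there is $i \in [n-1]$ such that, with $s$ the number of $0$ ending the $i$th column of $M_1$ and $p$ the number of $0$ starting its $(i+1)$st column, $s + p \geq n$ and $M_2$ is obtained by exchanging columns $i$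 and $i+1$ of $M_1$. $\leq_{\mathrm{M}}$ is the reflexive and transitive closure of $\to$. *)

(* Defs.v *)
From Stdlib Require Import Relations.
From mathcomp Require Import all_boot all_order all_algebra.
Set Implicit Arguments. Unset Strict Implicit. Unset Printing Implicit Defensive.

(* Entry (i,j) of an n x n matrix, with nat indices (0 outside range). *)
Definition mget (n : nat) (M : 'M[nat]_n) (i j : nat) : nat :=
  match @insub _ (fun x => x < n) 'I_n i, @insub _ (fun x => x < n) 'I_n j with
  | Some a, Some b => M a b
  | _, _ => 0
  end.

Definition packed (k n : nat) (M : 'M[nat]_n) : bool :=
  [&& [forall i, forall j, M i j <= k],
      [forall i, exists j, M i j != 0] &
      [forall j, exists i, M i j != 0]].

(* ov(M1,M2) = [[M1,0],[0,M2]] *)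
Definition ov (n1 n2 : nat) (M1 : 'M[nat]_n1) (M2 : 'M[nat]_n2) : 'M[nat]_(n1 + n2) :=
  \matrix_(i, j)
    (if (i < n1) && (j < n1) then mget M1 i j
     else if (n1 <= i) && (n1 <= j) then mget M2 (i - n1) (j - n1) else 0).

(* un(M1,M2) = [[0,M1],[M2,0]] : the top-right block is M1 (n1 x n1),
   the bottom-left block is M2 (n2 x n2). *)
Definition un (n1 n2 : nat) (M1 : 'M[nat]_n1) (M2 : 'M[nat]_n2) : 'M[nat]_(n1 + n2) :=
  \matrix_(i, j)
    (if (i < n1) && (n2 <= j) then mget M1 i (j - n2)
     else if (n1 <= i) && (j < n2) then mget M2 (i - n1) j else 0).

(* Column shuffle: S is the set of positions (of size n1) receiving, in order,
   the columns of M1 (padded with n2 zero rows below); the remaining positions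
   receive, in order, the columns of M2 (padded with n1 zero rows above). *)
Definition shuffle_mx (n1 n2 : nat) (M1 : 'M[nat]_n1) (M2 : 'M[nat]_n2)
  (S : {set 'I_(n1 + n2)}) : 'M[nat]_(n1 + n2) :=
  \matrix_(i, j)
    (let r := #|[set l in S | l < j]| in
     if j \in S then (if i < n1 then mget M1 i r else 0)
     else (if n1 <= i then mget M2 (i - n1) (j - r) else 0)).

Definition in_Shc (n1 n2 : nat) (M1 : 'M[nat]_n1) (M2 : 'M[nat]_n2)
  (M : 'M[nat]_(n1 + n2)) : Prop :=
  exists S : {set 'I_(n1 + n2)}, #|S| = n1 /\ shuffle_mx M1 M2 S = M.

Definition colseq (n : nat) (M : 'M[nat]_n) (j : 'I_n) : seq nat :=
  [seq M r j | r <- enum 'I_n].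

Definition lead_zeros (s : seq nat) : nat := find (fun x => x != 0) s.
Definition trail_zeros (s : seq nat) : nat := find (fun x => x != 0) (rev s).

Definition mstep (n : nat) (M1 M2 : 'M[nat]_n) : Prop :=
  exists (i i' : 'I_n), val i' = (val i).+1 /\
    n <= trail_zeros (colseq M1 i) + lead_zeros (colseq M1 i') /\
    M2 = xcol i i' M1.

Definition leM (n : nat) : relation 'M[nat]_n := clos_refl_trans _ (@mstep n).

(* Main.v *)
Require Import Defs.
From Stdlib Require Import Relations.
From mathcomp Require Import all_boot all_order all_algebra.
From mathcomp Require Import perm zify.
Set Implicit Arguments. Unset Strict Implicit. Unset Printing Implicit Defensive.

Section Gen.
Variable T : eqType.
Variable R : rel T.

Definition lstep (L L' : seq T) : Prop :=
  exists p c d s, L = p ++ c :: d :: s /\ R c d /\ L' = p ++ d :: c :: s.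
Definition lstar := clos_refl_trans _ lstep.

Lemma lstep_perm L L' : lstep L L' -> perm_eq L L'.
Proof.
move=> [p [c [d [s [-> [_ ->]]]]]]; apply/seq.permP => a.
rewrite !count_cat /=; lia.
Qed.

Lemma lstar_perm L L' : lstar L L' -> perm_eq L L'.
Proof.
elim=> [x y /lstep_perm //| x | x y z _ H1 _ H2]; first exact: perm_refl.
exact: perm_trans H1 H2.
Qed.

Fixpoint phi (L : seq T) : nat :=
  if L is x :: L' then count (fun y => R y x) L' + phi L' else 0.

Lemma phi_step p c d s : R c d -> ~~ R d c ->
  phi (p ++ d :: c :: s) = (phi (p ++ c :: d :: s)).+1.
Proof.
move=> Hcd Hdc; elim: p => [|x p IH] /=.
  rewrite Hcd (negbTE Hdc) /=; lia.
rewrite IH !count_cat /=; lia.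
Qed.

Lemma lstar_phi (P : pred T) (asym : forall x y, P x -> P y -> R x y -> ~~ R y x)
  L L' : lstar L L' -> all P L -> L = L' \/ phi L < phi L'.
Proof.
elim=> [x y [p [c [d [s [-> [Hcd ->]]]]]] | x | x y z Hxy IH1 Hyz IH2] HP.
- have Pc : P c by move/allP: HP; apply; rewrite mem_cat in_cons eqxx orbT.
  have Pd : P d by move/allP: HP; apply; rewrite mem_cat !in_cons eqxx !orbT.
  by right; rewrite (phi_step p s Hcd) //; apply: asym.
- by left.
- have HPy : all P y by rewrite -(perm_all _ (lstar_perm Hxy)).
  case: (IH1 HP) => [E|L1]; case: (IH2 HPy) => [E2|L2]; subst; auto.
  right; lia.
Qed.

Lemma lstar_antisym (P : pred T) (asym : forall x y, P x -> P y -> R x y -> ~~ R y x)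
  L L' : lstar L L' -> lstar L' L -> all P L -> L = L'.
Proof.
move=> H1 H2 HP.
have HP' : all P L' by rewrite -(perm_all _ (lstar_perm H1)).
case: (lstar_phi asym H1 HP) => // A; case: (lstar_phi asym H2 HP') => // B.
lia.
Qed.

Lemma lstar_filter (a : pred T) L L' : lstar L L' -> lstar (filter a L) (filter a L').
Proof.
elim=> [x y [p [c [d [s [-> [Hcd ->]]]]]] | x | x y z _ IH1 _ IH2].
- rewrite !filter_cat /=; case Ec: (a c); case Ed: (a d);
    try by apply: rt_refl.
  apply: rt_step; exists (filter a p), c, d, (filter a s); split=> //.
- exact: rt_refl.
- exact: rt_trans IH1 IH2.
Qed.

Lemma lstar_cons x L L' : lstar L L' -> lstar (x :: L) (x :: L').
Proof.
elim=> [y z [p [c [d [s [-> [Hcd ->]]]]]] | y | y z w _ IH1 _ IH2].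
- by apply: rt_step; exists (x :: p), c, d, s.
- exact: rt_refl.
- exact: rt_trans IH1 IH2.
Qed.

Lemma move_front X z Tl : all (fun x => R x z) X -> lstar (X ++ z :: Tl) (z :: X ++ Tl).
Proof.
elim: X => [|x X IH] /=; first by move=> _; apply: rt_refl.
move=> /andP [Hxz HX]; apply: rt_trans (lstar_cons x (IH HX)) _.
by apply: rt_step; exists [::], x, z, (X ++ Tl).
Qed.

Lemma move_back z Y Tl : all (R z) Y -> lstar (z :: Y ++ Tl) (Y ++ z :: Tl).
Proof.
elim: Y => [|y Y IH] /=; first by move=> _; apply: rt_refl.
move=> /andP [Hzy HY]; apply: rt_trans (lstar_cons y (IH HY)).
by apply: rt_step; exists [::], z, y, (Y ++ Tl).
Qed.

Lemma interleave (a : pred T) L :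
  (forall x y, x \in filter a L -> y \in filter (predC a) L -> R x y) ->
  lstar (filter a L ++ filter (predC a) L) L /\
  lstar L (filter (predC a) L ++ filter a L).
Proof.
elim: L => [|z L IH] /=; first by move=> _; split; apply: rt_refl.
case Ez: (a z) => /= HR.
- have HR' : forall x y, x \in filter a L -> y \in filter (predC a) L -> R x y.
    by move=> x y Hx Hy; apply: HR => //; rewrite in_cons Hx orbT.
  case: (IH HR') => H1 H2; split; first exact: lstar_cons.
  apply: rt_trans (lstar_cons z H2) _; apply: move_back.
  by apply/allP => y Hy; apply: HR => //; rewrite in_cons eqxx.
- have HR' : forall x y, x \in filter a L -> y \in filter (predC a) L -> R x y.
    by move=> x y Hx Hy; apply: HR => //; rewrite in_cons Hy orbT.
  case: (IH HR') => H1 H2; split; last exact: lstar_cons.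
  apply: rt_trans (move_front _ _) (lstar_cons z H1).
  by apply/allP => x Hx; apply: HR => //; rewrite in_cons eqxx.
Qed.

End Gen.

Section Filt.
Variable T : Type.
Variable a : pred T.
Variable x0 : T.

Lemma nth_filter_count L j : j < size L -> a (nth x0 L j) ->
  nth x0 (filter a L) (count a (take j L)) = nth x0 L j.
Proof.
elim: L j => [|z L IH] [|j] //= Hj Ha.
- by rewrite Ha.
- by case: (a z) => /=; rewrite IH.
Qed.

Lemma count_take_lt L j : j < size L -> a (nth x0 L j) ->
  count a (take j L) < count a L.
Proof.
elim: L j => [|z L IH] [|j] //= Hj Ha.
- by rewrite Ha; lia.
- have := IH j Hj Ha; lia.
Qed.

Lemma count_take_surj L r : r < count a L ->
  exists2 j, j < size L & a (nth x0 L j) && (count a (take j L) == r).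
Proof.
elim: L r => [|z L IH] r //=.
case Ez: (a z) => /= Hr.
- case: r Hr => [|r] Hr; first by exists 0 => //=; rewrite Ez.
  case: (IH r) => [|j Hj /andP [H1 /eqP H2]]; first lia.
  exists j.+1 => //. by rewrite /= H1 Ez H2 add1n eqxx.
- case: (IH r) => [|j Hj /andP [H1 /eqP H2]]; first lia.
  exists j.+1 => //. by rewrite /= H1 Ez H2 add0n eqxx.
Qed.

Lemma filter_charP L F : size F = count a L ->
  (forall j, j < size L -> a (nth x0 L j) -> nth x0 F (count a (take j L)) = nth x0 L j) ->
  filter a L = F.
Proof.
move=> HS HN; apply: (eq_from_nth (x0 := x0)); first by rewrite size_filter HS.
move=> r; rewrite size_filter => Hr.
case: (count_take_surj Hr) => j Hj /andP [Ha /eqP <-].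
by rewrite nth_filter_count // HN.
Qed.

End Filt.

Section Mx.
Variable n : nat.
Implicit Types M : 'M[nat]_n.

Definition cl M := [seq colseq M j | j <- enum 'I_n].

Lemma size_cl M : size (cl M) = n.
Proof. by rewrite size_map size_enum_ord. Qed.

Lemma nth_cl M (j : 'I_n) : nth [::] (cl M) j = colseq M j.
Proof. by rewrite (nth_map j) ?size_enum_ord // nth_ord_enum. Qed.

Lemma size_colseq M j : size (colseq M j) = n.
Proof. by rewrite size_map size_enum_ord. Qed.

Lemma nth_colseq M (i j : 'I_n) : nth 0 (colseq M j) i = M i j.
Proof. by rewrite (nth_map i) ?size_enum_ord // nth_ord_enum. Qed.

Lemma cl_inj M M' : cl M = cl M' -> M = M'.
Proof.
move=> E; apply/matrixP => i j.
by rewrite -!nth_colseq -!nth_cl E.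
Qed.

Lemma colseq_eq M M' j j' : (forall i, M i j = M' i j') -> colseq M j = colseq M' j'.
Proof. by move=> H; apply: eq_map. Qed.

Lemma count_take_enum (Q : pred 'I_n) (j : nat) :
  count Q (take j (enum 'I_n)) = #|[set l | Q l && (l < j)]|.
Proof.
have -> : take j (enum 'I_n) = [seq l : 'I_n <- enum 'I_n | l < j].
  apply: (inj_map val_inj); rewrite map_take val_enum_ord take_iota.
  transitivity (filter (fun x => x < j) (map val (enum 'I_n))); last by rewrite filter_map.
  rewrite val_enum_ord.
  case: (leqP j n) => H.
    by rewrite -{2}(add0n j) filter_iota_ltn.
  apply/esym/all_filterP/allP => x; rewrite mem_iota.
  lia.
rewrite count_filter cardE /enum_mem -enumT size_filter.
rewrite count_filter; apply: eq_count => l; by rewrite /= !inE andbT.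
Qed.

End Mx.

Section Mx2.
Variable n : nat.
Implicit Types M : 'M[nat]_n.

Definition Rn (c d : seq nat) : bool := n <= trail_zeros c + lead_zeros d.

Lemma xcol_entry (i i' : 'I_n) M r k : xcol i i' M r k = M r (tperm i i' k).
Proof. by rewrite /xcol /col_perm mxE. Qed.

Lemma cl_split M (i i' : 'I_n) : val i' = i.+1 ->
  cl M = take i (cl M) ++ colseq M i :: colseq M i' :: drop i.+2 (cl M).
Proof.
move=> Hi'.
have Hi1 : i.+1 < size (cl M) by rewrite size_cl -Hi' ltn_ord.
have Hi0 : i < size (cl M) by rewrite size_cl.
rewrite -{1}(cat_take_drop i (cl M)); congr (_ ++ _).
rewrite (drop_nth [::] Hi0) (drop_nth [::] Hi1) nth_cl.
have -> : i.+1 = val i' by rewrite Hi'.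
by rewrite nth_cl.
Qed.

Lemma cl_xcol M (i i' : 'I_n) : val i' = i.+1 ->
  cl (xcol i i' M) = take i (cl M) ++ colseq M i' :: colseq M i :: drop i.+2 (cl M).
Proof.
move=> Hi'.
have Hv : nat_of_ord i' = (nat_of_ord i).+1 by exact: Hi'.
apply: (eq_from_nth (x0 := [::])).
  rewrite size_cl size_cat /= size_take size_drop size_cl.
  have := ltn_ord i'; rewrite Hi' => H; rewrite ifT; lia.
move=> k; rewrite size_cl => Hk.
have -> : k = val (Ordinal Hk) by [].
rewrite nth_cl (colseq_eq (M' := M) (j' := tperm i i' (Ordinal Hk))); last first.
  by move=> r; rewrite xcol_entry.
rewrite nth_cat size_take size_cl ltn_ord.
case: (ltnP k i) => H1.
  rewrite nth_take // nth_cl tpermD //; apply/eqP => /(congr1 val) /=; lia.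
case: (eqVneq k i) => [Eki|Nki].
  have -> : Ordinal Hk = i by apply: val_inj.
  by rewrite tpermL subnn.
case: (eqVneq k i.+1) => [Eki1|Nki1].
  have -> : Ordinal Hk = i' by apply: val_inj => /=; rewrite Hi'.
  by rewrite tpermR Hi' subSn // subnn.
have -> : k - i = (k - i.+2).+2 by lia.
rewrite /= nth_drop.
have -> : i.+2 + (k - i.+2) = val (Ordinal Hk) by rewrite /=; lia.
rewrite nth_cl tpermD //; apply/eqP => /(congr1 val) /=; lia.
Qed.

Lemma mstep_lstep M M' : mstep M M' -> lstep Rn (cl M) (cl M').
Proof.
move=> [i [i' [Hi' [HR ->]]]].
exists (take i (cl M)), (colseq M i), (colseq M i'), (drop i.+2 (cl M)).
by rewrite cl_xcol // -cl_split.
Qed.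

Lemma lstep_mstep M L' : lstep Rn (cl M) L' -> exists M', mstep M M' /\ cl M' = L'.
Proof.
move=> [p [c [d [s [E [HR ->]]]]]].
have Hs := size_cl M; rewrite E size_cat /= in Hs.
have Hi : size p < n by rewrite -Hs addnS ltnS leq_addr.
have Hi1 : (size p).+1 < n by rewrite -Hs !addnS !ltnS leq_addr.
pose i := Ordinal Hi; pose i' := Ordinal Hi1.
have Hc : colseq M i = c by rewrite -nth_cl E nth_cat ltnn subnn.
have Hd : colseq M i' = d by rewrite -nth_cl E nth_cat /= ltnNge leqnSn /= subSn // subnn.
have Hp : take i (cl M) = p by rewrite E take_size_cat.
have Hs' : drop i.+2 (cl M) = s by rewrite E /= -add2n -drop_drop (drop_size_cat _ (erefl _)) /= drop0.
exists (xcol i i' M); split.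
  by exists i, i'; split => //; split => //; rewrite Hc Hd.
by rewrite cl_xcol // Hp Hs' Hc Hd.
Qed.

Lemma leM_lstar M M' : leM M M' -> lstar Rn (cl M) (cl M').
Proof.
elim=> [x y /mstep_lstep H | x | x y z _ H1 _ H2].
- exact: rt_step.
- exact: rt_refl.
- exact: rt_trans H1 H2.
Qed.

Lemma lstar_leM M L' : lstar Rn (cl M) L' -> exists M', leM M M' /\ cl M' = L'.
Proof.
move=> /clos_rt_rt1n_iff H.
remember (cl M) as L0 eqn:EM.
induction H as [x|x y z Hxy _ IH] in M, EM |- *.
  by exists M; split; [apply: rt_refl | rewrite EM].
rewrite EM in Hxy; case: (lstep_mstep Hxy) => M1 [H1 E1].
case: (IH M1 (esym E1)) => M2 [H2 E2].
exists M2; split => //; apply: rt_trans (rt_step _ _ _ _ H1) H2.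
Qed.

End Mx2.

Definition nz (x : nat) : bool := x != 0.

Lemma lead_ge (s : seq nat) m : (forall i, i < m -> nth 0 s i = 0) -> m <= size s ->
  m <= lead_zeros s.
Proof.
move=> H Hm; rewrite /lead_zeros; case: (ltnP (find (fun x => x != 0) s) m) => // Hf.
have Hh : has (fun x => x != 0) s by rewrite has_find; apply: leq_trans Hf Hm.
by have := nth_find 0 Hh; rewrite H.
Qed.

Lemma trail_ge (s : seq nat) m : (forall i, m <= i -> i < size s -> nth 0 s i = 0) ->
  size s - m <= trail_zeros s.
Proof.
move=> H; rewrite /trail_zeros; set q := find _ _.
case: (ltnP q (size s - m)) => // Hq.
have Hh : has (fun x => x != 0) (rev s) by rewrite has_find size_rev -/q; apply: leq_trans Hq (leq_subr _ _).
have := nth_find 0 Hh; rewrite -/q nth_rev; last by rewrite -size_rev -has_find.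
by rewrite H //; lia.
Qed.

Lemma lead_trail_lt (s : seq nat) : has (fun x => x != 0) s ->
  lead_zeros s + trail_zeros s < size s.
Proof.
move=> Hh; rewrite /lead_zeros /trail_zeros.
set p := find _ s; set q := find _ (rev s).
have Hp : p < size s by rewrite -has_find.
have Np := nth_find 0 Hh; rewrite -/p in Np.
case: (ltnP (p + q) (size s)) => // Hpq.
have := @before_find _ 0 (fun x => x != 0) (rev s) (size s - p.+1).
rewrite -/q nth_rev; last lia.
have -> : size s - (size s - p.+1).+1 = p by lia.
by rewrite Np => /(_ _) H; have := H ltac:(lia).
Qed.

Lemma mget_lt m (A : 'M[nat]_m) i j (Hi : i < m) (Hj : j < m) :
  mget A i j = A (Ordinal Hi) (Ordinal Hj).
Proof. by rewrite /mget (insubT (fun x => x < m) Hi) (insubT (fun x => x < m) Hj). Qed.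

Lemma mget_out m (A : 'M[nat]_m) i j : m <= i \/ m <= j -> mget A i j = 0.
Proof.
rewrite /mget => H.
case: (ltnP i m) => Hi; last by rewrite insubF // ltnNge Hi.
case: (ltnP j m) => Hj; last by rewrite (insubT (fun x => x < m) Hi) insubF // ltnNge Hj.
exfalso; lia.
Qed.

Lemma nth_colseq_nat n (A : 'M[nat]_n) (j : 'I_n) i (Hi : i < n) :
  nth 0 (colseq A j) i = A (Ordinal Hi) j.
Proof. by rewrite -nth_colseq. Qed.

Lemma nth_cl_nat n (A : 'M[nat]_n) j (Hj : j < n) : nth [::] (cl A) j = colseq A (Ordinal Hj).
Proof. by rewrite -nth_cl. Qed.

Section Main.
Variables (k n1 n2 : nat) (M1 : 'M[nat]_n1) (M2 : 'M[nat]_n2).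
Hypothesis P1 : packed k M1.
Hypothesis P2 : packed k M2.
Local Notation n := (n1 + n2).
Local Notation OV := (ov M1 M2).
Local Notation UN := (un M1 M2).

Definition t1 (c : seq nat) : bool := all (fun x => x == 0) (drop n1 c).

Lemma t1P (c : seq nat) : t1 c <-> (forall i, n1 <= i -> i < size c -> nth 0 c i = 0).
Proof.
split.
- move=> /(all_nthP 0) H i Hi Hs.
  have := H (i - n1); rewrite size_drop nth_drop subnKC // => /(_ ltac:(lia)) /eqP //.
- move=> H; apply/(all_nthP 0) => i; rewrite size_drop nth_drop => Hi.
  by apply/eqP; apply: H; lia.
Qed.

Lemma col1_nz (j : 'I_n1) : exists i : 'I_n1, M1 i j != 0.
Proof. by case/and3P: P1 => _ _ /forallP /(_ j) /existsP. Qed.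

Lemma col2_nz (j : 'I_n2) : exists i : 'I_n2, M2 i j != 0.
Proof. by case/and3P: P2 => _ _ /forallP /(_ j) /existsP. Qed.

Definition PP (c : seq nat) : bool := (size c == n) && has (fun x => x != 0) c.

Lemma asymR x y : PP x -> PP y -> Rn n x y -> ~~ Rn n y x.
Proof.
move=> /andP [/eqP Sx Hx] /andP [/eqP Sy Hy]; rewrite /Rn.
have := lead_trail_lt Hx; have := lead_trail_lt Hy; rewrite Sx Sy.
set a := lead_zeros x; set b := trail_zeros x; set c := lead_zeros y; set d := trail_zeros y.
move=> H1 H2 H3; apply/negP => H4; lia.
Qed.

Lemma ov_entry (i j : 'I_n) : OV i j =
  if (i < n1) && (j < n1) then mget M1 i j
  else if (n1 <= i) && (n1 <= j) then mget M2 (i - n1) (j - n1) else 0.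
Proof. by rewrite mxE. Qed.

Lemma un_entry (i j : 'I_n) : UN i j =
  if (i < n1) && (n2 <= j) then mget M1 i (j - n2)
  else if (n1 <= i) && (j < n2) then mget M2 (i - n1) j else 0.
Proof. by rewrite mxE. Qed.

Lemma PP_ov (j : 'I_n) : PP (colseq OV j).
Proof.
rewrite /PP size_colseq eqxx /=; apply/(has_nthP 0).
case: (ltnP j n1) => Hj.
- case: (col1_nz (Ordinal Hj)) => i Hi.
  have Hin : i < n by have := ltn_ord i; lia.
  exists i; first by rewrite size_colseq.
  rewrite (nth_colseq_nat _ _ Hin) ov_entry /= ltn_ord Hj /= (mget_lt _ (ltn_ord i) Hj).
  by have -> : Ordinal (ltn_ord i) = i by apply: val_inj.
- have Hj2 : j - n1 < n2 by have := ltn_ord j; lia.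
  case: (col2_nz (Ordinal Hj2)) => i Hi.
  have Hin : n1 + i < n by have := ltn_ord i; lia.
  exists (n1 + i); first by rewrite size_colseq.
  rewrite (nth_colseq_nat _ _ Hin) ov_entry /= ifF; last lia.
  rewrite leq_addr Hj /= addKn (mget_lt _ (ltn_ord i) Hj2).
  by have -> : Ordinal (ltn_ord i) = i by apply: val_inj.
Qed.

Definition X := take n1 (cl OV).
Definition Y := drop n1 (cl OV).

Lemma size_X : size X = n1.
Proof. rewrite /X size_take size_cl; case: ifP => //; lia. Qed.

Lemma size_Y : size Y = n2.
Proof. by rewrite /Y size_drop size_cl addKn. Qed.

Lemma memX x : x \in X -> exists j : 'I_n, j < n1 /\ x = colseq OV j.
Proof.
move=> /(nthP [::]) [r]; rewrite size_X => Hr <-.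
have Hrn : r < n by lia.
by exists (Ordinal Hrn); split => //; rewrite /X nth_take // nth_cl_nat.
Qed.

Lemma memY y : y \in Y -> exists j : 'I_n, n1 <= j /\ y = colseq OV j.
Proof.
move=> /(nthP [::]) [r]; rewrite size_Y => Hr <-.
have Hrn : n1 + r < n by lia.
by exists (Ordinal Hrn); split => /=; [lia | rewrite /Y nth_drop nth_cl_nat].
Qed.

Lemma allPP_ov : all PP (cl OV).
Proof.
apply/(all_nthP [::]) => r; rewrite size_cl => Hr.
by rewrite nth_cl_nat PP_ov.
Qed.

Lemma t1_X : all t1 X.
Proof.
apply/allP => x /memX [j [Hj ->]]; apply/t1P => i Hi; rewrite size_colseq => Hin.
by rewrite (nth_colseq_nat _ _ Hin) ov_entry /= ltnNge Hi /= ifF //; lia.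
Qed.

Lemma zero_top_Y y : y \in Y -> forall i, i < n1 -> nth 0 y i = 0.
Proof.
move=> /memY [j [Hj ->]] i Hi.
have Hin : i < n by lia.
by rewrite (nth_colseq_nat _ _ Hin) ov_entry /= Hi /= ltnNge Hj /= ifF //; lia.
Qed.

Lemma nt1_Y : all (predC t1) Y.
Proof.
apply/allP => y Hy; rewrite /= ; apply/negP => /t1P Ht.
move: (Hy) => /memY [j [Hj Ey]].
have := PP_ov j; rewrite -Ey => /andP [/eqP Sy /(has_nthP 0) [i Hi]].
case: (ltnP i n1) => Hi1.
  by rewrite (zero_top_Y Hy Hi1).
by rewrite Ht.
Qed.

Lemma cl_ov_XY : cl OV = X ++ Y.
Proof. by rewrite cat_take_drop. Qed.

Lemma filter_t1 L : L = X ++ Y \/ L = Y ++ X ->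
  filter t1 L = X /\ filter (predC t1) L = Y.
Proof.
have A1 : filter t1 X = X by apply/all_filterP; exact: t1_X.
have A2 : filter (predC t1) Y = Y by apply/all_filterP; exact: nt1_Y.
have A3 : filter t1 Y = [::].
  apply/eqP; rewrite -[_ == _]negbK -has_filter -all_predC; exact: nt1_Y.
have A4 : filter (predC t1) X = [::].
  apply/eqP; rewrite -[_ == _]negbK -has_filter -all_predC.
  by apply/allP => x Hx /=; rewrite negbK (allP t1_X).
by case=> ->; rewrite !filter_cat A1 A2 A3 A4 ?cats0.
Qed.

Lemma RXY x y : x \in X -> y \in Y -> Rn n x y.
Proof.
move=> Hx Hy; rewrite /Rn.
have Sx : size x = n by case/memX: Hx => j [_ ->]; rewrite size_colseq.
have Sy : size y = n by case/memY: Hy => j [_ ->]; rewrite size_colseq.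
have H1 := trail_ge (m := n1) (s := x) (proj1 (t1P x) (allP t1_X x Hx)).
have H2 := lead_ge (s := y) (m := n1) (zero_top_Y Hy) ltac:(rewrite Sy; lia).
rewrite Sx in H1; lia.
Qed.


Lemma cl_un : cl UN = Y ++ X.
Proof.
apply: (eq_from_nth (x0 := [::])).
  by rewrite size_cat size_X size_Y size_cl addnC.
move=> j; rewrite size_cl => Hj.
rewrite (nth_cl_nat _ Hj) nth_cat size_Y.
case: (ltnP j n2) => Hj2.
- have Hjn : n1 + j < n by lia.
  rewrite /Y nth_drop (nth_cl_nat _ Hjn); apply: colseq_eq => i.
  rewrite un_entry ov_entry /= (leqNgt n2 j) Hj2 andbF.
  have -> : (n1 + j < n1) = false by lia.
  rewrite andbF leq_addr andbT addKn.
  by case: (ltnP i n1) => Hi //=; rewrite ltnNge Hi.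
- have Hjn : j - n2 < n by lia.
  have Hjn1 : j - n2 < n1 by lia.
  rewrite /X nth_take // (nth_cl_nat _ Hjn); apply: colseq_eq => i.
  rewrite un_entry ov_entry /= Hjn1 andbT; case: (ltnP i n1) => Hi; first by rewrite ifT //; lia.
  rewrite /= ifF; last lia. rewrite ifF //; lia.
Qed.

Local Notation SH S := (shuffle_mx M1 M2 S).
Definition rk (S : {set 'I_n}) (j : 'I_n) := #|[set l in S | l < j]|.

Lemma sh_entry S (i j : 'I_n) : SH S i j =
  if j \in S then (if i < n1 then mget M1 i (rk S j) else 0)
  else (if n1 <= i then mget M2 (i - n1) (j - rk S j) else 0).
Proof. by rewrite mxE. Qed.

Lemma col_in S (j : 'I_n) (Hr : rk S j < n1) : j \in S -> colseq (SH S) j = nth [::] (cl OV) (rk S j).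
Proof.
move=> Hj; have Hrn : rk S j < n by lia.
rewrite (nth_cl_nat _ Hrn); apply: colseq_eq => i.
rewrite sh_entry ov_entry /= Hj Hr andbT (leqNgt n1 (rk S j)) Hr andbF.
by case: (ltnP i n1).
Qed.

Lemma col_out S (j : 'I_n) (Hr : j - rk S j < n2) : j \notin S ->
  colseq (SH S) j = nth [::] (cl OV) (n1 + (j - rk S j)).
Proof.
move=> Hj; have Hrn : n1 + (j - rk S j) < n by lia.
rewrite (nth_cl_nat _ Hrn); apply: colseq_eq => i.
rewrite sh_entry ov_entry /= (negbTE Hj).
have -> : (n1 + (j - rk S j) < n1) = false by lia.
rewrite andbF leq_addr andbT addKn.
by case: (ltnP i n1) => Hi //=; rewrite ltnNge Hi.
Qed.

Lemma rk_enum (S : {set 'I_n}) (j : 'I_n) : rk S j = count (mem S) (take j (enum 'I_n)).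
Proof. by rewrite count_take_enum; apply: eq_card => l; rewrite !inE. Qed.

Lemma card_enum (S : {set 'I_n}) : #|S| = count (mem S) (enum 'I_n).
Proof.
rewrite -(take_oversize (n := n) (s := enum 'I_n)) ?size_enum_ord //.
by rewrite count_take_enum; apply: eq_card => l; rewrite !inE ltn_ord andbT.
Qed.

Lemma rk_count (S : {set 'I_n}) (M : 'M[nat]_n) (Q : pred (seq nat)) (j : 'I_n) :
  (forall l, Q (colseq M l) = (l \in S)) -> rk S j = count Q (take j (cl M)).
Proof.
move=> H; rewrite /cl -map_take count_map count_take_enum.
by apply: eq_card => l; rewrite !inE /= H.
Qed.

Lemma count_all (S : {set 'I_n}) (M : 'M[nat]_n) (Q : pred (seq nat)) :
  (forall l, Q (colseq M l) = (l \in S)) -> count Q (cl M) = #|S|.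
Proof.
move=> H; rewrite card_enum /cl count_map; apply: eq_count => l /=; by rewrite H.
Qed.

Lemma rk_lt_in (S : {set 'I_n}) (j : 'I_n) : j \in S -> rk S j < #|S|.
Proof.
move=> Hj; rewrite rk_enum card_enum.
apply: (count_take_lt (x0 := j)); first by rewrite size_enum_ord.
by rewrite nth_ord_enum.
Qed.

Lemma rk_lt_out (S : {set 'I_n}) (j : 'I_n) : j \notin S -> j - rk S j < n - #|S|.
Proof.
move=> Hj; rewrite rk_enum card_enum.
have E1 := count_predC (mem S) (take j (enum 'I_n)).
have E2 := count_predC (mem S) (enum 'I_n).
rewrite size_take size_enum_ord ltn_ord in E1.
rewrite size_enum_ord in E2.
have := @count_take_lt _ (predC (mem S)) j (enum 'I_n) j.
rewrite size_enum_ord ltn_ord nth_ord_enum /= Hj => /(_ isT isT).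
move=> H; move: E1 E2 H. set a := count (mem S) (take _ _). set b := count (predC (mem S)) (take _ _). set c := count (mem S) (enum _). set d := count (predC (mem S)) (enum _). lia.
Qed.

Lemma t1_sh (S : {set 'I_n}) (j : 'I_n) : #|S| = n1 -> t1 (colseq (SH S) j) = (j \in S).
Proof.
move=> HS; case Hj: (j \in S).
- have Hr : rk S j < n1 by rewrite -HS rk_lt_in.
  rewrite col_in // -(nth_take _ Hr); apply: (allP t1_X); apply: mem_nth.
  by rewrite size_X.
- have Hr : j - rk S j < n2 by have := rk_lt_out (negbT Hj); rewrite HS; lia.
  rewrite col_out ?Hj // -nth_drop; apply/negbTE.
  have := allP nt1_Y; apply; apply: mem_nth; by rewrite size_Y.
Qed.

Lemma sh_filters (S : {set 'I_n}) : #|S| = n1 ->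
  filter t1 (cl (SH S)) = X /\ filter (predC t1) (cl (SH S)) = Y.
Proof.
move=> HS; have Ht := t1_sh (S := S) ^~ HS.
have Hc : count t1 (cl (SH S)) = n1 by rewrite (count_all Ht).
split; apply: (filter_charP (x0 := [::])).
- by rewrite size_X Hc.
- move=> j; rewrite size_cl => Hj; rewrite (nth_cl_nat _ Hj) Ht => HjS.
  rewrite (_ : count t1 (take j (cl (SH S))) = rk S (Ordinal Hj)); last exact/esym/(rk_count _ Ht).
  have Hr : rk S (Ordinal Hj) < n1 by have := rk_lt_in HjS; rewrite HS.
  by rewrite (col_in Hr HjS) /X nth_take.
- have := count_predC t1 (cl (SH S)); rewrite Hc size_cl size_Y; lia.
- move=> j; rewrite size_cl => Hj; rewrite (nth_cl_nat _ Hj) /= Ht => HjS.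
  have E := count_predC t1 (take j (cl (SH S))).
  rewrite size_take size_cl Hj in E.
  rewrite (_ : count t1 (take j (cl (SH S))) = rk S (Ordinal Hj)) in E; last exact/esym/(rk_count _ Ht).
  have -> : count (predC t1) (take j (cl (SH S))) = Ordinal Hj - rk S (Ordinal Hj).
    by rewrite /=; lia.
  rewrite col_out //; last by have := rk_lt_out HjS; rewrite HS; lia.
  by rewrite /Y nth_drop.
Qed.

Lemma filters_sh (M : 'M[nat]_n) :
  filter t1 (cl M) = X -> filter (predC t1) (cl M) = Y -> in_Shc M1 M2 M.
Proof.
move=> F1 F2; pose S := [set j | t1 (colseq M j)].
have Ht : forall l, t1 (colseq M l) = (l \in S) by move=> l; rewrite inE.
have HS : #|S| = n1 by rewrite -(count_all Ht) -size_filter F1 size_X.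
exists S; split => //; apply: cl_inj; rewrite /cl; apply: eq_map => j.
case Hj: (j \in S).
- have Hr : rk S j < n1 by rewrite -HS rk_lt_in.
  have E : colseq M j = nth [::] X (rk S j).
    rewrite -F1 (rk_count _ Ht) nth_filter_count ?size_cl ?ltn_ord ?nth_cl ?Ht //.
  by rewrite E (col_in Hr Hj) /X nth_take.
- have Hr : j - rk S j < n2 by have := rk_lt_out (negbT Hj); rewrite HS; lia.
  have E1 := count_predC t1 (take j (cl M)).
  rewrite size_take size_cl ltn_ord -(rk_count j Ht) in E1.
  have E : colseq M j = nth [::] Y (j - rk S j).
    have -> : j - rk S j = count (predC t1) (take j (cl M)) by lia.
    rewrite -F2 nth_filter_count ?size_cl ?ltn_ord ?nth_cl //= Ht Hj //.
  by rewrite E (col_out Hr (negbT Hj)) /Y nth_drop.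
Qed.

Lemma main_fwd (S : {set 'I_n}) : #|S| = n1 -> leM OV (SH S) /\ leM (SH S) UN.
Proof.
move=> HS; have [F1 F2] := sh_filters HS.
have HR : forall x y, x \in filter t1 (cl (SH S)) -> y \in filter (predC t1) (cl (SH S)) -> Rn n x y.
  by rewrite F1 F2; exact: RXY.
have [H1 H2] := interleave HR.
rewrite F1 F2 in H1 H2.
split.
- rewrite -cl_ov_XY in H1.
  have [M' [HM E]] := lstar_leM H1.
  by rewrite -(cl_inj E).
- rewrite -cl_un in H2.
  have [M' [HM E]] := lstar_leM H2.
  by rewrite (cl_inj E) in HM.
Qed.

Lemma main_bwd (M : 'M[nat]_n) : leM OV M -> leM M UN -> in_Shc M1 M2 M.
Proof.
move=> /leM_lstar H1 /leM_lstar H2.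
have [A1 A2] := filter_t1 (or_introl cl_ov_XY).
have [B1 B2] := filter_t1 (or_intror cl_un).
have allX : all PP X.
  by apply/allP => x Hx; apply: (allP allPP_ov); rewrite cl_ov_XY mem_cat Hx.
have allY : all PP Y.
  by apply/allP => x Hx; apply: (allP allPP_ov); rewrite cl_ov_XY mem_cat Hx orbT.
apply: filters_sh.
- have G1 := lstar_filter t1 H1; have G2 := lstar_filter t1 H2.
  rewrite A1 in G1; rewrite B1 in G2.
  exact/esym/(lstar_antisym asymR G1 G2 allX).
- have G1 := lstar_filter (predC t1) H1; have G2 := lstar_filter (predC t1) H2.
  rewrite A2 in G1; rewrite B2 in G2.
  exact/esym/(lstar_antisym asymR G1 G2 allY).
Qed.

End Main.



Unset Implicit Arguments.
Theorem proposition2p2 (k n1 n2 : nat) (M1 : 'M[nat]_n1) (M2 : 'M[nat]_n2) :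
  0 < k -> packed k M1 -> packed k M2 ->
  forall M : 'M[nat]_(n1 + n2),
    in_Shc M1 M2 M <-> (leM (ov M1 M2) M /\ leM M (un M1 M2)).
Proof.
move=> _ P1 P2 M; split.
- by case=> S [HS <-]; exact: (main_fwd P1 P2 HS).
- by case=> H1 H2; exact: (main_bwd P1 P2 H1 H2).
Qed.
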